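(* For $k=2$, $\Theta_2$ equals the support of $\nu_2$.
   Context: Take $k=2$. For a permutation $\tau$ of $\{0,1,2\}$ and $c=(c_1,c_2)\in(0,\infty)^2$: $E_{\tau,i}=\{j\in\{1,2\}:\min(\tau(j-1),\tau(j))<i\le\max(\tau(j-1),\tau(j))\}$, $F_{\tau,i}(c)=\sum_{j\in E_{\tau,i}}\sqrt{2c_j}$, $F_\tau=(F_{\tau,1},F_{\tau,2})$, $w_\tau(c)=\frac14\prod_{i=1}^2\sqrt{2c_i}/F_{\tau,i}(c)$. Explicitly, writing $s_i=\sqrt{2c_i}$: $F_{(0,1,2)}=(s_1,s_2)$, $w=1/4$; $F_{(0,2,1)}=(s_1,s_1+s_2)$, $w=\frac14 s_2/(s_1+s_2)$; $F_{(1,0,2)}=(s_1+s_2,s_2)$, $w=\frac14 s_1/(s_1+s_2)$; $F_{(1,2,0)}=(s_2,s_1+s_2)$, $w=\frac14 s_1/(s_1+s_2)$; $F_{(2,0,1)}=(s_1+s_2,s_1)$, $w=\frac14 s_2/(s_1+s_2)$; $F_{(2,1,0)}=(s_2,s_1)$, $w=1/4$ (here $\tau$ is written as $(\tau(0),\tau(1),\tau(2))$). $Q$ is the Markov kernel $Q(c,\cdot)=\sum_\tau w_\tau(c)\delta_{F_\tau(c)}$. For any probability $\nu^{(0)}$ supported in $[2,8]^2$, $\nu^{(0)}Q^n$ converges weakly to a probability $\nu_2$ independent of $\nu^{(0)}$. Let $\Theta^{(0)}=[2,8]^2$, $\Theta^{(n)}=\bigcup_\tau F_\tau(\Theta^{(n-1)})$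 (a nonincreasing sequence of nonempty compact sets), and $\Theta_2=\bigcap_n\Theta^{(n)}$. *)

(* Defs.v *)
From HB Require Import structures.
From mathcomp Require Import all_boot all_order all_algebra all_fingroup.
From mathcomp Require Import all_classical all_reals all_analysis.
Set Implicit Arguments. Unset Strict Implicit. Unset Printing Implicit Defensive.
Import Order.TTheory GRing.Theory Num.Theory.
Import numFieldNormedType.Exports.
Local Open Scope classical_set_scope.
Local Open Scope ring_scope.

Section Defs.
Variable R : realType.

Definition coord (c : R * R) (j : nat) : R := if j == 1%N then c.1 else c.2.
Definition sj (c : R * R) (j : nat) : R := Num.sqrt (2 * coord c j).
Definition tv (tau : 'S_3) (j : nat) : nat := nat_of_ord (tau (inord j)).
Definition inE (tau : 'S_3) (i j : nat) : bool :=
  (minn (tv tau j.-1) (tv tau j) < i <= maxn (tv tau j.-1) (tv tau j))%N.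
Definition Fi (tau : 'S_3) (c : R * R) (i : nat) : R :=
  \sum_(1 <= j < 3 | inE tau i j) sj c j.
Definition Ftau (tau : 'S_3) (c : R * R) : R * R := (Fi tau c 1, Fi tau c 2).
Definition wtau (tau : 'S_3) (c : R * R) : R :=
  4^-1 * \prod_(1 <= i < 3) (sj c i / Fi tau c i).

(* action of the kernel Q on functions: (Q f)(c) = sum_tau w_tau(c) f(F_tau(c)),
   so that  \int f d(nu Q) = \int (Q f) d nu. *)
Definition Qop (f : R * R -> R) (c : R * R) : R :=
  \sum_(tau : 'S_3) wtau tau c * f (Ftau tau c).
Definition Qpow (n : nat) (f : R * R -> R) : R * R -> R := iter n Qop f.

Definition Theta0 : set (R * R) := [set c | 2 <= c.1 <= 8 /\ 2 <= c.2 <= 8].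
Fixpoint Theta (n : nat) : set (R * R) :=
  match n with
  | 0%N => Theta0
  | n'.+1 => \bigcup_(tau in [set: 'S_3]) (Ftau tau @` Theta n')
  end.
Definition Theta2 : set (R * R) := \bigcap_(n in [set: nat]) Theta n.

Definition msupport (mu : set (R * R) -> \bar R) : set (R * R) :=
  [set x | forall U : set (R * R), open U -> U x -> (0 < mu U)%E].

Definition bdd_cont (f : R * R -> R) : Prop :=
  continuous f /\ exists M : R, forall x, `|f x| <= M.

Definition weak_lim_Qn (nu0 nu : probability (R * R)%type R) : Prop :=
  forall f : R * R -> R, bdd_cont f ->
    (fun n => (\int[nu0]_x (Qpow n f x)%:E)%E) @ \oo --> (\int[nu]_x (f x)%:E)%E.

End Defs.

(* Main.v *)
Require Import Defs.
From HB Require Import structures.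
From mathcomp Require Import all_boot all_order all_algebra all_fingroup.
From mathcomp Require Import all_classical all_reals all_analysis.
From mathcomp Require Import ring lra.
Import Order.TTheory GRing.Theory Num.Theory.
Import numFieldNormedType.Exports.
Local Open Scope classical_set_scope.
Local Open Scope ring_scope.
Notation T3 := ('I_3 * 'I_3 * 'I_3)%type.
Definition phi (tau : 'S_3) : T3 := (tau (inord 0), tau (inord 1), tau (inord 2)).
Definition fT (t : T3) (i : 'I_3) : 'I_3 :=
  if val i == 0%N then t.1.1 else if val i == 1%N then t.1.2 else t.2.
Definition dist3 (t : T3) : bool := [&& t.1.1 != t.1.2, t.1.1 != t.2 & t.1.2 != t.2].
Lemma fT_inj t : dist3 t -> injective (fT t).
Proof.
case: t => [[a b] c] /and3P[/= ab ac bc] [[|[|[|i]]] Hi] [[|[|[|j]]] Hj] //=;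
 rewrite /fT /= => E; apply/val_inj => //=; move: E => E.
all: by move: ab ac bc; rewrite E ?eqxx.
Qed.
Definition fT' (t : T3) : 'I_3 -> 'I_3 := if dist3 t then fT t else id.
Lemma fT'_inj t : injective (fT' t).
Proof. rewrite /fT'; case: ifP => [/fT_inj //|_]; exact: inj_id. Qed.
Definition hinv (t : T3) : 'S_3 := perm (fT'_inj t).
Lemma dist_phi tau : dist3 (phi tau).
Proof.
rewrite /dist3 /phi /= !(inj_eq perm_inj); apply/and3P; split;
 apply/eqP => /(congr1 val); rewrite /= !inordK //.
Qed.
Lemma sum_S3 (R : realType) (G : T3 -> R) : \sum_(tau : 'S_3) G (phi tau) = \sum_(t | dist3 t) G t.
Proof.
rewrite (reindex phi) /=; last first.
  exists hinv => [tau _|t]; rewrite /hinv.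
    apply/permP => i; rewrite permE /fT' dist_phi /fT /phi /=.
    case: i => [[|[|[|i]]] Hi] //=; congr (tau _); apply/val_inj; rewrite /= inordK //.
  rewrite inE => dt; rewrite /phi !permE /fT' dt.
  case: t dt => [[a b] c] dt; rewrite /fT /= !inordK //.
by apply: eq_bigl => tau; rewrite dist_phi.
Qed.
Section S.
Variable R : realType.
Definition inET1 (t : T3) (i : nat) : bool := (minn t.1.1 t.1.2 < i <= maxn t.1.1 t.1.2)%N.
Definition inET2 (t : T3) (i : nat) : bool := (minn t.1.2 t.2 < i <= maxn t.1.2 t.2)%N.
Definition FiT (t : T3) (c : R * R) (i : nat) : R :=
  (if inET1 t i then sj c 1 else 0) + (if inET2 t i then sj c 2 else 0).
Lemma Fi_eq tau c i : Fi tau c i = FiT (phi tau) c i.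
Proof.
rewrite /Fi big_mkcond /= big_ltn // big_ltn // big_geq // addr0.
by [].
Qed.
Definition W (t : T3) (c : R * R) : R := 4^-1 * ((sj c 1 / FiT t c 1) * (sj c 2 / FiT t c 2)).
Lemma wtau_eq tau c : wtau tau c = W (phi tau) c.
Proof.
by rewrite /wtau /W big_ltn // big_ltn // big_geq // mulr1 !Fi_eq.
Qed.
Lemma NE {t : T3} {i : nat} : dist3 t -> (i == 1%N) || (i == 2%N) -> inET1 t i || inET2 t i.
Proof.
case: t => [[[[|[|[|a]]] Ha] [[|[|[|b]]] Hb]] [[|[|[|c]]] Hc]] //=;
  rewrite /dist3 /= => D /orP[]/eqP-> //.
Qed.
Lemma sumW c : 0 < sj c 1 -> 0 < sj c 2 -> \sum_(t | dist3 t) W t c = 1.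
Proof.
move=> h1 h2.
rewrite big_mkcond /=.
set G := fun t : T3 => if dist3 t then W t c else 0.
rewrite -(pair_bigA _ (fun ab (z : 'I_3) => G (ab, z))) /=.
rewrite -(pair_bigA _ (fun (a b : 'I_3) => \sum_(j < 3) G (a, b, j))) /=.
rewrite !big_ord_recl !big_ord0 /G /dist3 /=.
rewrite /W /FiT /inET1 /inET2 /= ?add0r ?addr0.
set s1 := sj c 1; set s2 := sj c 2.
have s12 : s1 + s2 != 0 by rewrite gt_eqF // addr_gt0.
field. by rewrite s12 gt_eqF // gt_eqF.
Qed.
Lemma sqrt_props (x : R) : 0 <= x -> 0 <= Num.sqrt x /\ Num.sqrt x ^+ 2 = x.
Proof. by move=> x0; split; [exact: sqrtr_ge0|exact: sqr_sqrtr]. Qed.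
Lemma sj_ge0 (c : R * R) j : 0 <= sj c j.
Proof. exact: sqrtr_ge0. Qed.
Lemma coord1 (c : R * R) : Defs.coord c 1 = fst c. Proof. by []. Qed.
Lemma coord2 (c : R * R) : Defs.coord c 2 = snd c. Proof. by []. Qed.
Lemma sj_bnd {c : R * R} {j : nat} : Theta0 c -> (j == 1%N) || (j == 2%N) ->
  2 <= sj c j <= 4.
Proof.
move=> [/andP[a1 a2] /andP[b1 b2]] hj.
have [lo hi] : 2 <= Defs.coord c j /\ Defs.coord c j <= 8.
  by case/orP: hj => /eqP->; rewrite ?coord1 ?coord2.
have [h0 h2] := @sqrt_props (2 * Defs.coord c j) ltac:(lra).
rewrite /sj; apply/andP; split; nra.
Qed.
Lemma FiT_bnd {t : T3} {c : R * R} {i : nat} : dist3 t -> Theta0 c -> (i == 1%N) || (i == 2%N) ->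
  2 <= FiT t c i <= 8.
Proof.
move=> dt hc hi; have := NE dt hi; rewrite /FiT.
have /andP[l1 u1] := sj_bnd hc (isT : (1 == 1%N) || (1 == 2%N)).
have /andP[l2 u2] := sj_bnd hc (isT : (2 == 1%N) || (2 == 2%N)).
by case: (inET1 t i); case: (inET2 t i) => //= _; apply/andP; split; lra.
Qed.
Lemma FiT_ge0 t (c : R * R) i : 0 <= FiT t c i.
Proof. by rewrite /FiT; apply: addr_ge0; case: ifP => // _; exact: sj_ge0. Qed.
Lemma W_ge0 t (c : R * R) : 0 <= W t c.
Proof.
rewrite /W; apply: mulr_ge0; first by [].
by apply: mulr_ge0; apply: divr_ge0; (exact: sj_ge0 || exact: FiT_ge0).
Qed.
Lemma wtau_ge0 tau (c : R * R) : 0 <= wtau tau c.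
Proof. by rewrite wtau_eq W_ge0. Qed.
Lemma W_lb {t : T3} {c : R * R} : dist3 t -> Theta0 c -> 64^-1 <= W t c.
Proof.
move=> dt hc.
have /andP[l1 u1] := sj_bnd hc (isT : (1 == 1%N) || (1 == 2%N)).
have /andP[l2 u2] := sj_bnd hc (isT : (2 == 1%N) || (2 == 2%N)).
have /andP[f1 g1] := FiT_bnd dt hc (isT : (1 == 1%N) || (1 == 2%N)).
have /andP[f2 g2] := FiT_bnd dt hc (isT : (2 == 1%N) || (2 == 2%N)).
have q1 : 4^-1 <= sj c 1 / FiT t c 1.
  by rewrite ler_pdivlMr; [lra|lra].
have q2 : 4^-1 <= sj c 2 / FiT t c 2.
  by rewrite ler_pdivlMr; [lra|lra].
rewrite /W; set a := _ / _ in q1 *; set b := _ / _ in q2 *.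
have -> : (64^-1 : R) = 4^-1 * (4^-1 * 4^-1) by field.
apply: ler_pM => //; apply: ler_pM => //.
Qed.
Lemma sum_wtau (c : R * R) : Theta0 c -> \sum_(tau : 'S_3) wtau tau c = 1.
Proof.
move=> hc; under eq_bigr do rewrite wtau_eq.
rewrite (@sum_S3 R (fun t => W t c)) sumW //.
  by have /andP[] := sj_bnd hc (isT : (1 == 1%N) || (1 == 2%N)); lra.
by have /andP[] := sj_bnd hc (isT : (2 == 1%N) || (2 == 2%N)); lra.
Qed.
Lemma Ftau_Theta0 tau (c : R * R) : Theta0 c -> Theta0 (Ftau tau c).
Proof.
move=> hc; rewrite /Ftau /Theta0 /= !Fi_eq.
split; apply: FiT_bnd => //; exact: dist_phi.
Qed.
Lemma sqdiff (y y' d L : R) : 0 < L -> L <= y -> L <= y' -> 0 <= d ->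
  `|y ^+ 2 - y' ^+ 2| <= d -> `|y - y'| <= d / (2 * L).
Proof.
move=> L0 Ly Ly' d0 h; rewrite ler_pdivlMr; last lra.
apply: le_trans h; rewrite (_ : y ^+ 2 - y' ^+ 2 = (y - y') * (y + y')); last by ring.
rewrite normrM (ger0_norm (x := y + y')); last lra.
apply: ler_wpM2l => //; lra.
Qed.
Definition close (a b : R * R) (e : R) :=
  forall j, (j == 1%N) || (j == 2%N) -> `|sj a j - sj b j| <= e.
Lemma sjF tau (a : R * R) i : (i == 1%N) || (i == 2%N) ->
  sj (Ftau tau a) i = Num.sqrt (2 * FiT (phi tau) a i).
Proof. by case/orP => /eqP ->; rewrite /sj /Ftau /Defs.coord /= Fi_eq. Qed.
Lemma contr tau (a b : R * R) e : Theta0 a -> Theta0 b -> close a b e ->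
  close (Ftau tau a) (Ftau tau b) (3/4 * e).
Proof.
move=> ha hb hab j hj; rewrite !sjF //.
have dt := dist_phi tau; set t := phi tau.
have e0 : 0 <= e by apply: le_trans (hab 1%N isT); exact: normr_ge0.
have /andP[fa1 fa2] := FiT_bnd dt ha hj.
have /andP[fb1 fb2] := FiT_bnd dt hb hj.
have [ya0 ya2] := @sqrt_props (2 * FiT t a j) ltac:(lra).
have [yb0 yb2] := @sqrt_props (2 * FiT t b j) ltac:(lra).
set ya := Num.sqrt _ in ya0 ya2 *; set yb := Num.sqrt _ in yb0 yb2 *.
have /andP[a1l a1u] := sj_bnd ha (isT : (1 == 1%N) || (1 == 2%N)).
have /andP[a2l a2u] := sj_bnd ha (isT : (2 == 1%N) || (2 == 2%N)).
have /andP[b1l b1u] := sj_bnd hb (isT : (1 == 1%N) || (1 == 2%N)).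
have /andP[b2l b2u] := sj_bnd hb (isT : (2 == 1%N) || (2 == 2%N)).
have h1 := hab 1%N isT; have h2 := hab 2%N isT.
move: h1 h2; rewrite !ler_norml => /andP[h1 h1'] /andP[h2 h2'].
have := NE dt hj; move: fa1 fa2 fb1 fb2 ya2 yb2; rewrite /FiT.
case E1: (inET1 t j); case E2: (inET2 t j) => //= fa1 fa2 fb1 fb2 ya2 yb2 _.
- have L1 : 8/3 <= ya.
    rewrite leNgt; apply/negP => H; have : ya * ya < 8 by nra. move=> HH; move: ya2; rewrite expr2; lra.
  have L2 : 8/3 <= yb.
    rewrite leNgt; apply/negP => H; have : yb * yb < 8 by nra. move=> HH; move: ya2 yb2; rewrite !expr2; nra.
  have := @sqdiff ya yb (4 * e) (8/3) ltac:(lra) L1 L2 ltac:(lra).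
  rewrite ya2 yb2 => H.
  have H2 := H ltac:(rewrite ler_norml; apply/andP; split; lra).
  have E : 4 * e / (2 * (8 / 3)) = 3/4 * e by field.
  rewrite E ler_norml in H2; lra.
- have L1 : 2 <= ya.
    rewrite leNgt; apply/negP => H; have : ya * ya < 4 by nra. move=> HH; move: ya2 yb2; rewrite !expr2; nra.
  have L2 : 2 <= yb.
    rewrite leNgt; apply/negP => H; have : yb * yb < 4 by nra. move=> HH; move: ya2 yb2; rewrite !expr2; nra.
  have := @sqdiff ya yb (2 * e) 2 ltac:(lra) L1 L2 ltac:(lra).
  rewrite ya2 yb2 => H.
  have H2 := H ltac:(rewrite ler_norml; apply/andP; split; lra).
  have E : 2 * e / (2 * 2) = 1/2 * e by field.
  rewrite E ler_norml in H2; lra.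
- have L1 : 2 <= ya.
    rewrite leNgt; apply/negP => H; have : ya * ya < 4 by nra. move=> HH; move: ya2 yb2; rewrite !expr2; nra.
  have L2 : 2 <= yb.
    rewrite leNgt; apply/negP => H; have : yb * yb < 4 by nra. move=> HH; move: ya2 yb2; rewrite !expr2; nra.
  have := @sqdiff ya yb (2 * e) 2 ltac:(lra) L1 L2 ltac:(lra).
  rewrite ya2 yb2 => H.
  have H2 := H ltac:(rewrite ler_norml; apply/andP; split; lra).
  have E : 2 * e / (2 * 2) = 1/2 * e by field.
  rewrite E ler_norml in H2; lra.
Qed.
Lemma close_init (a b : R * R) : Theta0 a -> Theta0 b -> close a b 2.
Proof.
move=> ha hb j hj; have /andP[l1 u1] := sj_bnd ha hj.
have /andP[l2 u2] := sj_bnd hb hj.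
rewrite ler_norml; apply/andP; split; lra.
Qed.
Lemma close_coord (a b : R * R) e : Theta0 a -> Theta0 b -> close a b e ->
  `|a.1 - b.1| <= 4 * e /\ `|a.2 - b.2| <= 4 * e.
Proof.
move=> ha hb hab.
have gen : forall j, (j == 1%N) || (j == 2%N) ->
    `|Defs.coord a j - Defs.coord b j| <= 4 * e.
  move=> j hj; have := hab j hj; rewrite /sj.
  have /andP[l1 u1] := sj_bnd ha hj; have /andP[l2 u2] := sj_bnd hb hj.
  move: l1 u1 l2 u2; rewrite /sj.
  have ca : 0 <= Defs.coord a j.
    by case: ha => /andP[? ?] /andP[? ?]; case/orP: hj => /eqP->; rewrite /Defs.coord /=; lra.
  have cb : 0 <= Defs.coord b j.
    by case: hb => /andP[? ?] /andP[? ?]; case/orP: hj => /eqP->; rewrite /Defs.coord /=; lra.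
  have [ya0 ya2] := @sqrt_props (2 * Defs.coord a j) ltac:(lra).
  have [yb0 yb2] := @sqrt_props (2 * Defs.coord b j) ltac:(lra).
  move: ya0 ya2 yb0 yb2.
  set ya := Num.sqrt _; set yb := Num.sqrt _ => ya0 ya2 yb0 yb2 l1 u1 l2 u2.
  rewrite !ler_norml => /andP[h h']; rewrite !expr2 in ya2 yb2.
  apply/andP; split; nra.
by split; [exact: (gen 1%N isT)|exact: (gen 2%N isT)].
Qed.
Lemma Qop_ge0 (f : R * R -> R) : (forall x, 0 <= f x) -> forall x, 0 <= Qop f x.
Proof.
move=> f0 x; rewrite /Qop; apply: sumr_ge0 => tau _.
apply: mulr_ge0; [exact: wtau_ge0|exact: f0].
Qed.
Lemma Qpow_ge0 n (f : R * R -> R) : (forall x, 0 <= f x) -> forall x, 0 <= Qpow n f x.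
Proof.
move=> f0; elim: n => [|n IH] x; first exact: f0.
by rewrite /Qpow iterS; apply: Qop_ge0.
Qed.
Lemma Qop_lb (f : R * R -> R) eta : (forall x, Theta0 x -> eta <= f x) ->
  forall c, Theta0 c -> eta <= Qop f c.
Proof.
move=> fl c hc; rewrite /Qop.
apply: (@le_trans _ _ (\sum_(tau : 'S_3) wtau tau c * eta)).
  by rewrite -mulr_suml sum_wtau // mul1r.
apply: ler_sum => tau _; apply: ler_wpM2l; first exact: wtau_ge0.
by apply: fl; exact: Ftau_Theta0.
Qed.
Lemma Qpow_lb n (f : R * R -> R) eta : (forall x, Theta0 x -> eta <= f x) ->
  forall c, Theta0 c -> eta <= Qpow n f c.
Proof.
move=> fl; elim: n => [|n IH] c hc; first exact: fl.
by rewrite /Qpow iterS; apply: Qop_lb.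
Qed.
Lemma Qop_single (f : R * R -> R) tau c : (forall x, 0 <= f x) ->
  wtau tau c * f (Ftau tau c) <= Qop f c.
Proof.
move=> f0; rewrite /Qop (bigD1 tau) //= lerDl; apply: sumr_ge0 => s _.
apply: mulr_ge0; [exact: wtau_ge0|exact: f0].
Qed.
Lemma Theta_sub0 n : Theta n `<=` @Theta0 R.
Proof.
elim: n => [//|n IH] x /= [tau _ [y hy <-]]; apply: Ftau_Theta0; exact: IH.
Qed.
Lemma Theta_mono n : Theta n.+1 `<=` @Theta R n.
Proof.
elim: n => [|n IH] x /= [tau _ [y hy <-]].
  by apply: Ftau_Theta0.
by exists tau => //; exists y => //; apply: IH.
Qed.
Lemma Theta_mono' n m : (n <= m)%N -> Theta m `<=` @Theta R n.
Proof.
move=> /subnK <-; elim: (m - n)%N => [|k IH] //=.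
exact: subset_trans (@Theta_mono _) IH.
Qed.
Lemma Qpow_zero m (f : R * R -> R) n : (forall x, Theta (n + m) x -> f x = 0) ->
  forall c, Theta n c -> Qpow m f c = 0.
Proof.
elim: m n => [|m IH] n fz c hc; first by apply: fz; rewrite addn0.
rewrite /Qpow iterS /Qop; apply: big1 => tau _.
apply/eqP; rewrite mulf_eq0; apply/orP; right; apply/eqP.
apply: (IH n.+1); first by move=> x; rewrite addSnnS; exact: fz.
by exists tau => //; exists c.
Qed.
Lemma LB n (f : R * R -> R) x : (forall y, 0 <= f y) -> Theta n x ->
  forall c, Theta0 c -> exists z, [/\ Theta0 z, close z x (2 * (3/4) ^+ n) &
     (64^-1) ^+ n * f z <= Qpow n f c].
Proof.
elim: n f x => [|n IH] f x f0 hx c hc.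
  by exists c; split => //; [rewrite expr0 mulr1; exact: close_init|rewrite expr0 mul1r].
case: hx => tau _ [y hy <-].
have [z [hz czy hzl]] := IH (Qop f) y (@Qop_ge0 f f0) hy c hc.
exists (Ftau tau z); split; first exact: Ftau_Theta0.
  have -> : 2 * (3/4 : R)^+n.+1 = 3/4 * (2 * (3/4)^+n) by rewrite exprS; ring.
  by apply: contr => //; apply: (Theta_sub0 n).
have -> : Qpow n.+1 f c = Qpow n (Qop f) c.
  by rewrite /Qpow (iterSr n (@Qop R) f).
apply: le_trans hzl.
rewrite exprSr -mulrA; apply: ler_wpM2l; first by apply: exprn_ge0.
apply: le_trans (@Qop_single f tau z f0); apply: ler_wpM2r; first exact: f0.
rewrite wtau_eq; exact: W_lb (dist_phi tau) hz.
Qed.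
End S.
Section T2.
Variable R : realType.
Lemma sj_cont j : continuous (fun c : R * R => sj c j).
Proof.
move=> y; rewrite /sj /Defs.coord; case: (j == 1%N).
  apply: (continuous_comp (f := fun c : R * R => 2 * c.1)); last exact: sqrt_continuous.
  apply: cvgM; [exact: cvg_cst|exact: cvg_fst].
apply: (continuous_comp (f := fun c : R * R => 2 * c.2)); last exact: sqrt_continuous.
apply: cvgM; [exact: cvg_cst|exact: cvg_snd].
Qed.
Lemma Fi_cont tau i : continuous (fun c : R * R => Fi tau c i).
Proof.
move=> y; under eq_fun do rewrite Fi_eq; rewrite /FiT.
apply: cvgD; (case: ifP => _; [exact: sj_cont|exact: cvg_cst]).
Qed.
Lemma Ftau_cont tau : continuous (@Ftau R tau).
Proof. have H : continuous (fun c : R * R => (Fi tau c 1, Fi tau c 2)).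
  move=> z; apply: (@cvg_pair _ _ _ _ (nbhs (Fi tau z 1)) (nbhs (Fi tau z 2))); exact: Fi_cont.
exact: H. Qed.
Lemma Theta_compact n : compact (@Theta R n).
Proof.
elim: n => [|n IH] /=.
  have -> : @Theta0 R = `[2, 8]%classic `*` `[2, 8]%classic.
    by apply/seteqP; split => x /=; rewrite !in_itv /=.
  apply: compact_setX; exact: segment_compact.
have -> : \bigcup_(tau in [set: 'S_3]) [set Ftau tau x | x in Theta n] =
   \bigcup_(tau in [set` enum 'S_3]) [set Ftau tau x | x in @Theta R n].
  by congr (\bigcup_(_ in _) _); apply/seteqP; split => x //= _; rewrite mem_enum.
rewrite bigcup_seq; apply: bigsetU_compact => tau _.
apply: continuous_compact => //; apply: continuous_subspaceT; exact: Ftau_cont.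
Qed.
Lemma Theta_closed n : closed (@Theta R n).
Proof. apply: compact_closed; [exact: norm_hausdorff|exact: Theta_compact]. Qed.
End T2.
Section T3.
Variable R : realType.
Local Open Scope ereal_scope.
Lemma le_int0 (mu : {measure set (R * R) -> \bar R}) (f g : R * R -> \bar R) :
  (forall x, 0 <= f x) -> (forall x, f x <= g x) ->
  \int[mu]_x f x <= \int[mu]_x g x.
Proof.
move=> f0 fg; have g0 x : 0 <= g x by apply: le_trans (fg x).
rewrite !ge0_integralTE //; apply: le_ereal_sup => _ [h hh <-].
by exists h => // x; exact: le_trans (hh x) (fg x).
Qed.
Lemma int_lb (mu : {measure set (R * R) -> \bar R}) (A : set (R * R)) (eta : R)
  (f : R * R -> R) : measurable A -> (0 <= eta)%R -> (forall x, 0 <= f x)%R ->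
  (forall x, A x -> eta <= f x)%R -> eta%:E * mu A <= \int[mu]_x (f x)%:E.
Proof.
move=> mA eta0 f0 fA.
have E : \int[mu]_x ((eta * \1_A x)%R)%:E = eta%:E * mu A.
  rewrite (@integralZl_indic _ _ _ mu setT measurableT (fun _ => A) eta); last 2 first.
  - by rewrite ltNge eta0.
  - exact: mA.
  by rewrite integral_indic // setIT.
rewrite -E; apply: le_int0 => x.
  by rewrite lee_fin; apply: mulr_ge0 => //; rewrite indicE.
rewrite lee_fin indicE; case: (boolP (x \in A)) => [/set_mem xA|_].
  by rewrite mulr1; exact: fA.
by rewrite mulr0; exact: f0.
Qed.
Lemma int_zero (mu : {measure set (R * R) -> \bar R}) (A : set (R * R))
  (f : R * R -> R) : measurable A -> mu (~` A) = 0 -> (forall x, 0 <= f x)%R ->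
  (forall x, A x -> f x = 0%R) -> \int[mu]_x (f x)%:E = 0.
Proof.
move=> mA mA0 f0 fA; apply/eqP; rewrite eq_le; apply/andP; split; last first.
  by apply: integral_ge0 => x _; rewrite lee_fin.
apply: le_trans (@le_int0 mu (fun x => (f x)%:E) ((cst +oo) \_ (~` A)) _ _) _.
- by move=> x; rewrite lee_fin.
- move=> x; rewrite /patch; case: ifP => [_|]; first exact: leey.
  rewrite in_setC => /negbFE /set_mem /fA ->; exact: lexx.
rewrite -integral_mkcond integral_cst; last exact: measurableC.
by rewrite mA0 mule0.
Qed.
End T3.
Section T4.
Variable R : realType.
Definition box (q : rat * rat * rat) : set (R * R) :=
  `](ratr q.1.1 - ratr q.2), (ratr q.1.1 + ratr q.2)[%classic `*`
  `](ratr q.1.2 - ratr q.2), (ratr q.1.2 + ratr q.2)[%classic.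
Lemma box_meas q : measurable (box q).
Proof. by apply: measurableX; exact: measurable_itv. Qed.
Lemma open_meas (U : set (R * R)) : open U -> measurable U.
Proof.
move=> oU.
pose G q := if pselect (box q `<=` U) then box q else set0.
have -> : U = \bigcup_q G q.
  apply/seteqP; split => [y Uy|y [q _]]; last first.
    rewrite /G; case: pselect => // H; exact: H.
  have : nbhs y U by rewrite nbhsE /=; exists U.
  move=> /nbhs_ballP [e e0 yeU].
  move: e0 => /= e0.
  have /rat_in_itvoo[rho hrho] : e / 4 < e / 2 by lra.
  have /rat_in_itvoo[q1 hq1] : y.1 - e / 4 < y.1 + e / 4 by lra.
  have /rat_in_itvoo[q2 hq2] : y.2 - e / 4 < y.2 + e / 4 by lra.
  move: hrho hq1 hq2; rewrite !in_itv /= => /andP[r1 r2] /andP[a1 a2] /andP[b1 b2].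
  exists (q1, q2, rho) => //; rewrite /G; case: pselect => [HH|HH]; last first.
    case: HH; move=> z [] /=; rewrite !in_itv /= => /andP[z1 z1'] /andP[z2 z2'].
    apply: yeU; split; rewrite /ball /= ltr_norml; apply/andP; split; lra.
  by split; rewrite /= in_itv /=; apply/andP; split; lra.
apply: countable_bigcupT_measurable; first exact: countableP.
by move=> q; rewrite /G; case: pselect => HH; [exact: box_meas|exact: measurable0].
Qed.
End T4.
Section T5.
Variable R : realType.
Definition bump (x : R * R) (r : R) (y : R * R) : R :=
  Num.max 0 (1 - Num.max `|y.1 - x.1| `|y.2 - x.2| / r).
Lemma bump_cont x r : continuous (bump x r).
Proof.
move=> y; rewrite /bump.
apply: (@continuous_max _ _ (fun _ => 0) (fun y => 1 - Num.max `|y.1 - x.1| `|y.2 - x.2| / r)).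
  exact: cvg_cst.
apply: cvgB; first exact: cvg_cst.
apply: cvgM; last exact: cvg_cst.
apply: (@continuous_max _ _ (fun y : R*R => `|y.1 - x.1|) (fun y => `|y.2 - x.2|)).
  apply: cvg_norm; apply: cvgB; [exact: cvg_fst|exact: cvg_cst].
apply: cvg_norm; apply: cvgB; [exact: cvg_snd|exact: cvg_cst].
Qed.
Lemma bump_ge0 x r y : 0 <= bump x r y.
Proof. by rewrite /bump le_max lexx. Qed.
Lemma bump_le1 x r y : 0 < r -> bump x r y <= 1.
Proof.
move=> r0; rewrite /bump ge_max ler01 /= lerBlDr lerDl.
by apply: divr_ge0; [rewrite le_max normr_ge0|exact: ltW].
Qed.
Lemma bump_out x r y : 0 < r -> ~ ball x r y -> bump x r y = 0.
Proof.
move=> r0 nb; apply/eqP; rewrite eq_le bump_ge0 andbT /bump ge_max lexx /=.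
rewrite subr_le0 ler_pdivlMr // mul1r le_max.
case/boolP: (r <= `|y.1 - x.1|) => //= h1; rewrite -ltNge in h1.
rewrite leNgt; apply/negP => h2; apply: nb; split; rewrite /ball /= distrC //.
Qed.
Lemma bump_half x r y : 0 < r -> `|y.1 - x.1| <= r / 2 -> `|y.2 - x.2| <= r / 2 ->
  1 / 2 <= bump x r y.
Proof.
move=> r0 h1 h2; rewrite /bump le_max; apply/orP; right.
have hm : Num.max `|y.1 - x.1| `|y.2 - x.2| <= r / 2 by rewrite ge_max h1 h2.
have : Num.max `|y.1 - x.1| `|y.2 - x.2| / r <= 1 / 2.
  by rewrite ler_pdivrMr // (le_trans hm) //; lra.
lra.
Qed.
Lemma bump_bdd x r : 0 < r -> bdd_cont (bump x r).
Proof.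
move=> r0; split; first exact: bump_cont.
by exists 1 => y; rewrite ger0_norm ?bump_ge0 ?bump_le1.
Qed.
End T5.
Arguments bump {R}. Arguments bump_cont {R}. Arguments bump_ge0 {R}. Arguments bump_le1 {R}.
Arguments bump_out {R}. Arguments bump_half {R}. Arguments bump_bdd {R}.
Arguments open_meas {R}. Arguments le_int0 {R}. Arguments int_lb {R}. Arguments int_zero {R}.
Arguments LB {R}. Arguments close_coord {R}. Arguments Qpow_lb {R}. Arguments Qpow_zero {R}.
Arguments Theta_mono' {R}. Arguments Theta_sub0 {R}. Arguments Theta_closed {R}.
Arguments Qpow_ge0 {R}. Arguments Ftau_Theta0 {R}.

Section Main.
Variable R : realType.
Local Open Scope ereal_scope.
Lemma mT0 : measurable (@Theta0 R).
Proof.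
have -> : @Theta0 R = `[2%R, 8%R]%classic `*` `[2%R, 8%R]%classic.
  by apply/seteqP; split => x /=; rewrite !in_itv /=.
by apply: measurableX; exact: measurable_itv.
Qed.
Lemma nu0T (nu0 : probability (R * R)%type R) : nu0 (~` @Theta0 R) = 0 -> nu0 (@Theta0 R) = 1.
Proof.
move=> H0; rewrite -(probability_setT nu0) -(setUv (@Theta0 R)) measureU.
- by apply/esym; rewrite -[X in _ = X]adde0; congr (_ + _); exact: H0.
- exact: mT0.
- by apply: measurableC; exact: mT0.
- by rewrite setICr.
Qed.
Lemma dirB (nu0 nu2 : probability (R * R)%type R) :
  nu0 (~` @Theta0 R) = 0 -> weak_lim_Qn nu0 nu2 -> msupport nu2 `<=` @Theta2 R.
Proof.
move=> H0 Hw x hx n _; apply: contrapT => hn.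
have oC : open (~` @Theta R n) by apply: closed_openC; exact: Theta_closed.
have /nbhs_ballP[e e0 beC] : nbhs x (~` @Theta R n) by rewrite nbhsE /=; exists (~` Theta n).
move: e0 => /= e0.
set f := bump x e.
have f0 y : (0 <= f y)%R by exact: bump_ge0.
have fz y : Theta n y -> f y = 0%R.
  by move=> hy; apply: bump_out => // /beC.
have u0 : \forall m \near \oo, \int[nu0]_y (Qpow m f y)%:E = 0.
  near=> m; apply: int_zero.
  - exact: mT0.
  - exact: H0.
  - exact: Qpow_ge0.
  - move=> c hc; apply: (@Qpow_zero R m f 0%N) => // y hy; apply: fz.
    apply: (@Theta_mono' R n m) => //.
    near: m; by exists n.
have hlim := Hw f (bump_bdd x e e0).
have int0 : \int[nu2]_y (f y)%:E = 0.
  have h0 := cvg_near_cst _ u0 (FF := eventually_filter).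
  by rewrite -(cvg_lim _ hlim) // (cvg_lim _ h0).
have mb : measurable (ball x (e / 2)) by apply: open_meas; exact: ball_open.
have fA : forall y, ball x (e / 2) y -> (1/2 <= f y)%R.
  move=> y [b1 b2]; apply: bump_half => //.
    by rewrite distrC; apply: ltW.
  by rewrite distrC; apply: ltW.
have H := @int_lb R nu2 (ball x (e / 2)) (1/2) f mb ltac:(lra) f0 fA.
rewrite int0 in H.
have pos : 0 < nu2 (ball x (e / 2)).
  apply: hx; first exact: ball_open.
  by apply: ballxx; lra.
have hp : 0 < (1/2)%:E * nu2 (ball x (e / 2)) by apply: mule_gt0 => //; rewrite lte_fin; lra.
by rewrite leNgt hp in H.
Unshelve. all: by end_near.
Qed.
Lemma dirA (nu0 nu2 : probability (R * R)%type R) :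
  nu0 (~` @Theta0 R) = 0 -> weak_lim_Qn nu0 nu2 -> @Theta2 R `<=` msupport nu2.
Proof.
move=> H0 Hw x hx U oU Ux.
have hxn m : Theta m x by exact: hx.
have /nbhs_ballP[e e0 beU] : nbhs x U by rewrite nbhsE /=; exists U.
move: e0 => /= e0.
set f := bump x e.
have f0 y : (0 <= f y)%R by exact: bump_ge0.
have [M HM] : exists M, ((3/4 : R) ^+ M <= e / 16)%R.
  have h34 : (`|(3/4 : R)| < 1)%R by rewrite ger0_norm; lra.
  have [N _ HN] := cvgr0_norm_lt _ (cvg_expr h34) (e / 16)%R ltac:(lra).
  exists N; have := HN N (leqnn N); rewrite /= ger0_norm; last by apply: exprn_ge0; lra.
  exact: ltW.
pose eta : R := ((64^-1) ^+ M / 2)%R.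
have eta0 : (0 < eta)%R by rewrite /eta; apply: divr_gt0 => //; apply: exprn_gt0.
have lbM : forall c, Theta0 c -> (eta <= Qpow M f c)%R.
  move=> c hc; have [z [hz czx hzl]] := LB M f x f0 (hxn M) c hc.
  have [c1 c2] := close_coord z x _ hz (Theta_sub0 M x (hxn M)) czx.
  have hb : (1/2 <= f z)%R.
    apply: bump_half => //; [apply: le_trans c1 _|apply: le_trans c2 _]; lra.
  apply: le_trans hzl; rewrite /eta; apply: ler_wpM2l; first by apply: exprn_ge0.
  by move: hb; rewrite mul1r.
have lbn : forall n, (M <= n)%N -> forall c, Theta0 c -> (eta <= Qpow n f c)%R.
  move=> n hn c hc; rewrite /Qpow -(subnK hn) iterD.
  exact: (Qpow_lb (n - M) (Qpow M f) eta lbM c hc).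
have ineq n : (M <= n)%N -> eta%:E <= \int[nu0]_y (Qpow n f y)%:E.
  move=> hn; rewrite -[eta%:E]mule1 -(nu0T nu0 H0).
  apply: int_lb; [exact: mT0|exact: ltW|exact: Qpow_ge0|exact: lbn].
have hlim := Hw f (bump_bdd x e e0).
have le1 : eta%:E <= \int[nu2]_y (f y)%:E.
  rewrite -(cvg_lim _ hlim) //; apply: lime_ge; first by apply/cvg_ex; eexists; exact: hlim.
  near=> n; apply: ineq; near: n; by exists M.
have le2 : \int[nu2]_y (f y)%:E <= nu2 U.
  apply: le_trans (le_int0 nu2 (fun y => (f y)%:E) (fun y => (\1_U y)%:E) _ _) _.
  - by move=> y; rewrite lee_fin.
  - move=> y; rewrite lee_fin indicE; case: (boolP (y \in U)) => [_|nyU].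
      exact: bump_le1.
    rewrite /f bump_out //; move=> /beU Uy; by rewrite (mem_set Uy) in nyU.
  by rewrite integral_indic ?setIT //; exact: open_meas.
apply: lt_le_trans le2; apply: lt_le_trans le1; by rewrite lte_fin.
Unshelve. all: by end_near.
Qed.
End Main.

Theorem lemma2 (R : realType) (nu0 nu2 : probability (R * R)%type R) :
  nu0 (~` @Theta0 R) = 0%E ->
  weak_lim_Qn nu0 nu2 ->
  @Theta2 R = msupport nu2.
Proof.
move=> H0 Hw; apply/seteqP; split.
- exact (@dirA R nu0 nu2 H0 Hw).
- exact (@dirB R nu0 nu2 H0 Hw).
Qed.
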